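(* Let $G$ be a group, $E$ a real Banach space, and $f\colon G\to E$ such that $\|f(xy)+f(xy^{-1})-2f(x)\|\le c$ for all $x,y\in G$, where $c>0$. Define $c_1=c+2\|f(1)\|$, $c_2=c+\|f(1)\|$, $c_3=c+c_1$, and $c_m=c+c_1+c_{m-2}$ for $m>3$. Then for every integer $m>1$, every $k\in\mathbb{N}$ and every $x\in G$, $\|f(x^{m^k})-m^kf(x)\|\le c_m(1+m+\cdots+m^{k-1})$ and $\left\|\frac{1}{m^k}f(x^{m^k})-f(x)\right\|\le c_m$. *)

(* Defs.v *)
From HB Require Import structures.
From mathcomp Require Import all_boot all_order all_algebra.
From mathcomp Require Import boolp classical_sets reals topology normedtype.
Set Implicit Arguments. Unset Strict Implicit. Unset Printing Implicit Defensive.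
Import Order.TTheory GRing.Theory Num.Theory.
Local Open Scope ring_scope.

(* The constants c_m of the paper, given c, c1 = c + 2||f(1)|| and
   c2 = c + ||f(1)||:  c_1 = c1, c_2 = c2, c_3 = c + c1,
   c_m = c + c1 + c_(m-2) for m > 3.  (c_0 is unused; set to 0.) *)
Fixpoint cseq_aux (R : realType) (c c1 c2 : R) (m : nat) : R :=
  match m with
  | 0 => 0
  | 1 => c1
  | 2 => c2
  | 3 => c + c1
  | p.+2 => c + c1 + cseq_aux c c1 c2 p
  end.

Definition cconst (R : realType) (c a : R) (m : nat) : R :=
  cseq_aux c (c + 2 * a) (c + a) m.

(* Main.v *)
Require Import Defs.
From HB Require Import structures.
From mathcomp Require Import all_boot all_order all_algebra.
From mathcomp Require Import boolp classical_sets reals topology normedtype.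
Import Order.TTheory GRing.Theory Num.Theory.
Local Open Scope ring_scope.

Lemma zid (V : zmodType) (A B C P Y Z : V) :
  A - (P + Y) = (A + B - Y) - (C + B - Z) - Z + (C - P).
Proof.
rewrite !opprD !opprK !addrA addrK (addrAC _ (-B) C) subrK (addrAC _ (-Y)) addrK.
by rewrite addrAC.
Qed.

Lemma cconst_ge0 (R : realType) (c a : R) m : 0 <= c -> 0 <= a -> 0 <= cconst c a m.
Proof.
move=> hc ha; rewrite /cconst.
elim/ltn_ind: m => -[|[|[|[|p]]]] IH //=.
- by rewrite addr_ge0 // mulr_ge0.
- by rewrite addr_ge0.
- by rewrite !addr_ge0 // mulr_ge0.
- rewrite !addr_ge0 ?mulr_ge0 //; exact: (IH p.+2).
Qed.

Lemma base (R : realType) (G : groupType) (E : completeNormedModType R)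
  (f : G -> E) (c : R) (hc : 0 < c)
  (hf : forall x y : G,
      `|f (x * y)%g + f (x * y^-1)%g - 2 *: f x| <= c)
  (m : nat) (hm : (0 < m)%N) (x : G) :
  `|f (x ^+ m)%g - m%:R *: f x| <= cconst c `|f 1%g| m.
Proof.
set a := `|f 1%g|.
have ha : 0 <= a by exact: normr_ge0.
elim/ltn_ind: m hm => -[|[|[|p]]] IH // _.
- rewrite expg1 scale1r subrr normr0; exact: cconst_ge0 (ltW hc) ha.
- rewrite /cconst /=.
  have := hf x x; rewrite mulgV -expg2.
  set u := f (x ^+ 2)%g; set v := f 1%g => h.
  have -> : u - 2%:R *: f x = (u + v - 2 *: f x) - v by rewrite addrAC addrK.
  apply: (le_trans (ler_normB _ _)); rewrite -/a; exact: lerD h (lexx _).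
-
  have h1 := hf x (x ^+ p.+2)%g.
  have h2 := hf 1%g (x ^+ p.+1)%g.
  have e1 : (x * x ^+ p.+2)%g = (x ^+ p.+3)%g by rewrite -expgS.
  have e2 : (x * (x ^+ p.+2)^-1)%g = ((x ^+ p.+1)^-1)%g.
    by rewrite expgSr invgM mulgA mulgV mul1g.
  rewrite e1 e2 in h1; rewrite !mul1g in h2.
  have IHp : `|f (x ^+ p.+1)%g - p.+1%:R *: f x| <=
      cseq_aux c (c + 2 * a) (c + a) p.+3 - (c + (c + 2 * a)).
    case: p {IH h1 h2 e1 e2} (IH p.+1 (leqnSn p.+2) isT) => [|q] IHq.
      by rewrite expg1 scale1r /= !subrr normr0.
    by rewrite [cseq_aux _ _ _ q.+4]/= [X in _ <= X]addrC addKr.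
  rewrite -[p.+3]addn2 natrD scalerDl (@zid _ _ (f (x ^- p.+1)%g) (f (x ^+ p.+1)%g) _ _ (2 *: f 1%g)).
  rewrite /cconst !addn2.
  rewrite -[X in _ <= X](subrK (c + (c + 2 * a))) addrC.
  apply: (le_trans (ler_normD _ _)); apply: lerD; first exact: IHp.
  apply: (le_trans (ler_normB _ _)).
  rewrite addrA; apply: lerD; last by rewrite normrZ (_ : (2%:R : R) = 2) // ger0_norm.
  apply: (le_trans (ler_normB _ _)); apply: lerD => //.
Qed.

Theorem lemma2p4 (R : realType) (G : groupType) (E : completeNormedModType R)
  (f : G -> E) (c : R) (hc : 0 < c)
  (hf : forall x y : G,
      `|f (x * y)%g + f (x * y^-1)%g - 2 *: f x| <= c)
  (m k : nat) (hm : (1 < m)%N) (x : G) :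
  `|f (x ^+ (m ^ k))%g - (m ^ k)%:R *: f x|
      <= cconst c `|f 1%g| m * \sum_(i < k) (m ^ i)%:R
  /\ `|(m ^ k)%:R^-1 *: f (x ^+ (m ^ k))%g - f x| <= cconst c `|f 1%g| m.
Proof.
have hb := fun y => @base R G E f c hc hf m (ltnW hm) y.
set C := cconst c `|f 1%g| m in hb *.
have C0 : 0 <= C by apply: cconst_ge0; [exact: ltW | exact: normr_ge0].
have P1 : forall k, `|f (x ^+ (m ^ k))%g - (m ^ k)%:R *: f x|
      <= C * \sum_(i < k) (m ^ i)%:R.
  elim=> [|n IH].
    by rewrite expn0 expg1 scale1r subrr normr0 big_ord0 mulr0.
  rewrite expnSr expgnA big_ord_recl expn0 mulrDr mulr1.
  have -> : f ((x ^+ (m ^ n)) ^+ m)%g - (m ^ n * m)%:R *: f x =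
     (f ((x ^+ (m ^ n)) ^+ m)%g - m%:R *: f (x ^+ (m ^ n))%g)
     + m%:R *: (f (x ^+ (m ^ n))%g - (m ^ n)%:R *: f x).
    by rewrite scalerBr scalerA -natrM mulnC addrA subrK.
  apply: (le_trans (ler_normD _ _)); apply: lerD; first exact: hb.
  rewrite normrZ ger0_norm // (eq_bigr (fun i : 'I_n => m%:R * (m ^ i)%:R)).
    by rewrite -mulr_sumr mulrCA ler_wpM2l.
  by move=> i _; rewrite expnS natrM.
split; first exact: P1.
have hmk : (0 < m ^ k)%N by rewrite expn_gt0 ltnW.
have hmkR : 0 < (m ^ k)%:R :> R by rewrite ltr0n.
rewrite -[f x](scalerK (lt0r_neq0 hmkR)) -scalerBr normrZ ger0_norm; last first.
  by rewrite invr_ge0 ltW.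
rewrite mulrC ler_pdivrMr //.
apply: (le_trans (P1 k)); rewrite ler_wpM2l //.
rewrite -natr_sum ler_nat.
elim: (k) => [|n IH]; first by rewrite big_ord0.
rewrite big_ord_recr /= expnS.
apply: (leq_trans (leq_add IH (leqnn _))).
by rewrite addnn -mul2n leq_mul2r hm orbT.
Qed.
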